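(* Let $\mathcal{X}\subseteq\mathbb{R}^{n_x}$, $\mathcal{U}\subseteq\mathbb{R}^{n_u}$ non-empty, compact and convex, and $\mathcal{E}\subseteq\mathbb{R}^{n_x}$. Let $f(x,u)=f_x(x)+f_u(x)u$ and $\hat f(x,u)=\hat f_x(x)+\hat f_u(x)u$ with $f_x,\hat f_x:\mathcal{X}\to\mathbb{R}^{n_x}$, $f_u,\hat f_u:\mathcal{X}\to\mathbb{R}^{n_x\times n_u}$, and assume $f(x,u)-\hat f(x,u)\in\mathcal{E}$ for all $(x,u)\in\mathcal{X}\times\mathcal{U}$. Let $\pi:\mathcal{X}\times\mathcal{E}\to\mathcal{U}$ be of the form $\pi(x,e)=\pi_x(x)+\pi_e(x)e$ with $\pi_x:\mathcal{X}\to\mathbb{R}^{n_u}$, $\pi_e:\mathcal{X}\to\mathbb{R}^{n_u\times n_x}$. Then for every $x\in\mathcal{X}$, the set of $u\in\mathcal{U}$ satisfying $$u=\pi_x(x)+\pi_e(x)\Big(f_x(x)-\hat f_x(x)+\big(f_u(x)-\hat f_u(x)\big)u\Big)$$ is non-empty, coincides with the set of solutions of $u=\pi(x,f(x,u)-\hat f(x,u))$, $u\in\mathcal{U}$, and is convex (so a solution is obtained by a convex feasibility program). If moreover $\mathcal{U}$ is a polytope, this feasibility problem is a linear program.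
   Context: The equation $u=\pi(x,f(x,u)-\hat f(x,u))$, $u\in\mathcal{U}$, is the concretization problem for the informed policy $\pi$ at state $x$. *)

(* Defs.v *)
From HB Require Import structures.
From mathcomp Require Import all_boot all_order all_algebra.
From mathcomp Require Import all_classical all_reals all_analysis.
Set Implicit Arguments. Unset Strict Implicit. Unset Printing Implicit Defensive.
Import Order.TTheory GRing.Theory Num.Theory.
Import numFieldNormedType.Exports.
Local Open Scope classical_set_scope.
Local Open Scope ring_scope.

Definition halfspaces (R : realType) (n m : nat)
  (A : 'M[R]_(m, n)) (b : 'cV[R]_m) : set 'cV[R]_n :=
  [set u | forall i : 'I_m, (A *m u) i 0 <= b i 0].

Definition polytope (R : realType) (n : nat) (S : set 'cV[R]_n) : Prop :=
  (exists (m : nat) (A : 'M[R]_(m, n)) (b : 'cV[R]_m), S = halfspaces A b)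
  /\ bounded_set S.

(* Main.v *)
Require Import Defs.
From HB Require Import structures.
From mathcomp Require Import all_boot all_order all_algebra.
From mathcomp Require Import all_classical all_reals all_analysis.
From mathcomp Require Import ring lra.
Import Order.TTheory GRing.Theory Num.Theory.
Import numFieldNormedType.Exports.
Local Open Scope classical_set_scope.
Local Open Scope ring_scope.


Section Helpers.
Variable R : realType.

Lemma sum_cont m (I : Type) (r : seq I) (F : I -> 'cV[R]_m -> R) :
  (forall i, continuous (F i)) -> continuous (fun u => \sum_(i <- r) F i u).
Proof.
move=> H; elim: r => [|a r IH].
  under eq_fun do rewrite big_nil; exact: cst_continuous.
under eq_fun do rewrite big_cons.
by move=> x; apply: (continuousD (H a x) (IH x)).
Qed.

Lemma affine_entry_cont m (M : 'M[R]_m) (c : 'cV[R]_m) i :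
  continuous (fun u : 'cV[R]_m => (M *m u + c - u) i 0).
Proof.
under eq_fun do rewrite !mxE.
move=> x.
apply: (@continuousD _ _ _ (fun u : 'cV[R]_m => \sum_j M i j * u j 0 + c i 0) (fun u => - u i 0)); last first.
  apply: continuousN; exact: coord_continuous.
apply: (@continuousD _ _ _ (fun u : 'cV[R]_m => \sum_j M i j * u j 0) (fun u => c i 0)); last exact: cst_continuous.
apply: sum_cont => j y.
have h1 : {for y, continuous (fun _ : 'cV[R]_m => M i j)} by exact: cst_continuous.
have h2 : {for y, continuous (fun u : 'cV[R]_m => u j 0)} by exact: coord_continuous.
exact: (continuousM h1 h2).
Qed.

Definition N1 m (v : 'cV[R]_m) := \sum_i `|v i 0|.
Arguments N1 {m}.

Lemma N1_cont m (f : 'cV[R]_m -> 'cV[R]_m) :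
  (forall i : 'I_m, continuous (fun u => f u i 0)) -> continuous (fun u => N1 (f u)).
Proof.
move=> H; apply: sum_cont => i x.
exact: (continuous_comp (H i x) (@norm_continuous _ R^o _)).
Qed.

Lemma conv2 m (U : set 'cV[R]_m) x y (t : R) : convex_set U -> U x -> U y -> 0 <= t -> t <= 1 ->
  U (t *: x + (1 - t) *: y).
Proof.
move=> cU Ux Uy t0 t1.
have := cU x y (Itv01 t0 t1) (mem_set Ux) (mem_set Uy).
by move/set_mem.
Qed.

Lemma N1_ge0 m (v : 'cV[R]_m) : 0 <= N1 v.
Proof. by apply: sumr_ge0 => i _. Qed.

Lemma N1Z m (a : R) (v : 'cV[R]_m) : N1 (a *: v) = `|a| * N1 v.
Proof. rewrite /N1 mulr_sumr; apply: eq_bigr => i _; by rewrite mxE normrM. Qed.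

Lemma N1B m (v w : 'cV[R]_m) : N1 (v - w) <= N1 v + N1 w.
Proof.
rewrite /N1 -big_split /=; apply: ler_sum => i _; rewrite !mxE.
exact: ler_normB.
Qed.

Lemma N1_eq0 m (v : 'cV[R]_m) : N1 v = 0 -> v = 0.
Proof.
move=> /eqP; rewrite psumr_eq0 // => /allP H.
apply/matrixP => i j; rewrite (ord1 j) mxE.
have /H : i \in index_enum 'I_m by rewrite mem_index_enum.
by move/implyP => /(_ isT); rewrite normr_eq0 => /eqP.
Qed.

Lemma fixpoint m (U : set 'cV[R]_m) (M : 'M[R]_m) (c : 'cV[R]_m) :
  U !=set0 -> compact U -> convex_set U -> (forall u, U u -> U (M *m u + c)) ->
  exists u, U u /\ M *m u + c = u.
Proof.
move=> [u0 Uu0] cpU cU gU.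
pose g u := M *m u + c.
pose it k := iter k g u0.
have Uit k : U (it k) by elim: k => //= k IH; exact: gU.
pose s n := \sum_(k < n) it k.
have key1 n : M *m s n + n%:R *: c = s n - u0 + it n.
  elim: n => [|n IH].
    by rewrite /s big_ord0 mulmx0 scale0r add0r /= sub0r addNr.
  rewrite /s big_ord_recr /= -/(s n) mulmxDr -natr1 scalerDl scale1r addrACA IH.
  by rewrite [s n + _ - _]addrAC.

have avg n : U (n.+1%:R^-1 *: s n.+1).
  elim: n => [|n IH].
    by rewrite /s big_ord_recr big_ord0 /= add0r invr1 scale1r.
  have -> : n.+2%:R^-1 *: s n.+2 =
     (n.+1%:R / n.+2%:R) *: (n.+1%:R^-1 *: s n.+1) + (1 - n.+1%:R / n.+2%:R) *: it n.+1.
    rewrite scalerA /s big_ord_recr /= scalerDr; congr (_ + _).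
      congr (_ *: _); field; apply/andP; split; apply/eqP; have := ler0n R n; lra.
    congr (_ *: _); field; apply/eqP; have := ler0n R n; lra.
  apply: conv2 => //.
  by rewrite ler_pdivrMr ?ltr0n // mul1r ler_nat.
pose h u := N1 (M *m u + c - u).
have hc : continuous h by apply: N1_cont => i; exact: affine_entry_cont.
have idc : continuous (fun u : 'cV[R]_m => N1 u).
  apply: (@N1_cont m id) => i; exact: coord_continuous.
have U0 : U !=set0 by exists u0.
have [v0 _ Hv0] := compact_EVT_max U0 cpU (continuous_subspaceT idc).
have [us /set_mem Uus Hus] := compact_EVT_min U0 cpU (continuous_subspaceT hc).
set B := N1 v0.
have hbound n : h us <= n.+1%:R^-1 * (B + B).
  apply: (le_trans (Hus _ (mem_set (avg n)))).
  rewrite /h.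
  have -> : M *m (n.+1%:R^-1 *: s n.+1) + c - n.+1%:R^-1 *: s n.+1 =
            n.+1%:R^-1 *: (it n.+1 - u0).
    rewrite -scalemxAr.
    have -> : c = n.+1%:R^-1 *: (n.+1%:R *: c).
      by rewrite scalerA mulVf ?pnatr_eq0 // scale1r.
    rewrite -!scalerDr -scalerBr; congr (_ *: _); rewrite key1.
    by rewrite addrAC [s _ - u0 - _]addrAC subrr add0r addrC.
  rewrite N1Z ger0_norm ?invr_ge0 ?ler0n //.
  apply: ler_wpM2l; first by rewrite invr_ge0 ler0n.
  apply: le_trans; first exact: N1B.
  apply: lerD; apply: Hv0; exact: mem_set.
have h0 : h us = 0.
  apply/eqP; rewrite eq_le N1_ge0 andbT; apply/negP => /negP; rewrite -ltNge => hpos.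
  have := hbound (Num.truncn ((B + B) / h us)).
  apply/negP; rewrite -ltNge ltr_pdivrMl ?ltr0n // -ltr_pdivrMr //.
  exact: truncnS_gt.
exists us; split => //.
by apply/eqP; rewrite -subr_eq0; apply/eqP; exact: N1_eq0.
Qed.


Lemma affine_comb n (M : 'M[R]_n) (c a b : 'cV[R]_n) (t : R) :
  M *m (t *: a + (1 - t) *: b) + c = t *: (M *m a + c) + (1 - t) *: (M *m b + c).
Proof.
rewrite mulmxDr -!scalemxAr !scalerDr addrACA.
by rewrite -scalerDl subrKC scale1r.
Qed.

Local Open Scope convex_scope.
Lemma convE n (a b : convex_lmodType 'cV[R]_n) (l : {i01 R}) :
  a <| l |> b = l%:num *: (a : 'cV[R]_n) + (1 - l%:num) *: (b : 'cV[R]_n).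
Proof. by []. Qed.
End Helpers.

Theorem theorem4 (R : realType) (nx nu : nat)
  (X : set 'cV[R]_nx) (U : set 'cV[R]_nu) (E : set 'cV[R]_nx)
  (fx hfx : 'cV[R]_nx -> 'cV[R]_nx) (fu hfu : 'cV[R]_nx -> 'M[R]_(nx, nu))
  (pix : 'cV[R]_nx -> 'cV[R]_nu) (pie : 'cV[R]_nx -> 'M[R]_(nu, nx)) :
  X !=set0 -> compact X -> convex_set X ->
  U !=set0 -> compact U -> convex_set U ->
  (* f(x,u) - \hat f(x,u) \in E on X x U *)
  (forall x u, X x -> U u ->
     E ((fx x + fu x *m u) - (hfx x + hfu x *m u))) ->
  (* pi : X x E -> U *)
  (forall x e, X x -> E e -> U (pix x + pie x *m e)) ->
  forall x, X x ->
    let S := [set u | U u /\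
               u = pix x + pie x *m (fx x - hfx x + (fu x - hfu x) *m u)] in
    [/\ S !=set0,
        S = [set u | U u /\
               u = pix x + pie x *m ((fx x + fu x *m u) - (hfx x + hfu x *m u))],
        convex_set S
      & polytope U ->
        exists (p : nat) (A : 'M[R]_(p, nu)) (b : 'cV[R]_p)
               (C : 'M[R]_(nu, nu)) (d : 'cV[R]_nu),
          S = [set u | halfspaces A b u /\ C *m u = d]].
Proof.
move=> X0 cX cvX U0 cU cvU HE Hpi x Xx S.
set M := pie x *m (fu x - hfu x).
set c := pix x + pie x *m (fx x - hfx x).
have eqg u : pix x + pie x *m (fx x - hfx x + (fu x - hfu x) *m u) = M *m u + c.
  by rewrite /M /c mulmxDr mulmxA [pie x *m (fx x - hfx x) + _]addrC addrCA.
have eqd u : (fx x + fu x *m u) - (hfx x + hfu x *m u) = fx x - hfx x + (fu x - hfu x) *m u.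
  by rewrite mulmxBl opprD addrACA.
have gU u : U u -> U (M *m u + c).
  by move=> Uu; rewrite -eqg -eqd; apply: Hpi => //; exact: HE.
split.
- have [u [Uu eu]] := @fixpoint R _ U M c U0 cU cvU gU.
  by exists u; split => //; rewrite eqg.
- rewrite /S; apply: eq_set => u; by rewrite eqd.
- move=> a b l /set_mem [Ua ea] /set_mem [Ub eb]; apply/mem_set; split.
    by have := cvU a b l (mem_set Ua) (mem_set Ub); move/set_mem.
  rewrite eqg in ea; rewrite eqg in eb; rewrite eqg.
  rewrite convE.
  rewrite affine_comb.
  by rewrite -ea -eb.
- move=> [[p [A [b Ueq]]] _].
  exists p, A, b, (1%:M - M), c.
  rewrite /S Ueq; apply: eq_set => u; rewrite eqg mulmxBl mul1mx.
  apply/propext; split => [[h e]|[h e]]; split => //.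
    by rewrite {1}e addrAC subrr add0r.
  by rewrite -e addrC subrK.
Qed.
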